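(* Let $0\le\gamma<1$ and $\beta>0$, and let $f\in\mathcal{B}(\Omega_\gamma)$ have the expansion $f(z)=\sum_{n=0}^\infty a_n\left(z+\frac{\gamma}{1-\gamma}\right)^n$ in $\Omega_\gamma$. Then $$\sum_{n=0}^\infty \frac{|a_n|}{(n+\beta)(1-\gamma)^n}\rho^n\le\frac{1}{\beta}\qquad\text{for all }\rho\in[0,\rho_1],$$ where $\rho_1=\rho_1(\beta)$ is the unique root in $(0,1)$ of the equation $$\frac{1}{\beta}-2\sum_{n=1}^\infty\frac{\rho^n}{n+\beta}=0.$$ The number $\rho_1$ is best possible: for every $\rho\in(\rho_1,1)$ there exists $f\in\mathcal{B}(\Omega_\gamma)$ for which the left-hand side exceeds $1/\beta$.
   Context: For $\gamma\in[0,1)$, $\Omega_\gamma=\left\{z\in\mathbb{C}:\left|z+\frac{\gamma}{1-\gamma}\right|<\frac{1}{1-\gamma}\right\}$, the open disk with center $-\frac{\gamma}{1-\gamma}$ and radius $\frac{1}{1-\gamma}$. It contains the unit disk $\mathbb{D}$. The class $\mathcal{B}(\Omega_\gamma)$ consists of all analytic functions $f$ on $\Omega_\gamma$ with $|f|\le 1$ on $\Omega_\gamma$. The parameter $\rho\in[0,1)$ plays the role of $|\gamma+(1-\gamma)z|$ for $z\in\Omega_\gamma$. *)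

(* Defs.v *)
From Stdlib Require Import Reals.
From Coquelicot Require Import Coquelicot.
Open Scope R_scope.

Definition Omega_center (g : R) : C := RtoC (- (g / (1 - g))).
Definition Omega_radius (g : R) : R := / (1 - g).

Definition in_Omega (g : R) (z : C) : Prop :=
  Cmod (Cminus z (Omega_center g)) < Omega_radius g.

Definition has_expansion (g : R) (f : C -> C) (a : nat -> C) : Prop :=
  forall z, in_Omega g z ->
    is_series (fun n => Cmult (a n) (Cpow (Cminus z (Omega_center g)) n)) (f z).

(* f in B(Omega_gamma): analytic (given by the expansion) with |f| <= 1 *)
Definition in_B (g : R) (f : C -> C) : Prop :=
  forall z, in_Omega g z -> Cmod (f z) <= 1.

Definition bohr_term (g beta rho : R) (a : nat -> C) (n : nat) : R :=
  Cmod (a n) / ((INR n + beta) * (1 - g) ^ n) * rho ^ n.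

Definition rho1_eq (beta rho : R) : R :=
  / beta - 2 * Series (fun n => rho ^ (S n) / (INR (S n) + beta)).

(* Main.v *)
Require Import Defs.
From Stdlib Require Import Reals Lra Lia Psatz.
From Coquelicot Require Import Coquelicot.
Open Scope R_scope.

Lemma exR_minus (a b : nat -> R) : ex_series a -> ex_series b -> ex_series (fun n => a n - b n).
Proof. intros. apply (@ex_series_minus R_AbsRing R_NormedModule); auto. Qed.
Lemma exR_plus (a b : nat -> R) : ex_series a -> ex_series b -> ex_series (fun n => a n + b n).
Proof. intros. apply (@ex_series_plus R_AbsRing R_NormedModule); auto. Qed.
Lemma exR_scal (c : R) (a : nat -> R) : ex_series a -> ex_series (fun n => c * a n).
Proof. intros. apply (@ex_series_scal_l R_AbsRing R_NormedModule); auto. Qed.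
Lemma exR_le (a b : nat -> R) : (forall n, Rabs (a n) <= b n) -> ex_series b -> ex_series a.
Proof. intros. apply (@ex_series_le R_AbsRing R_CompleteNormedModule a b); auto. Qed.

Lemma Series_zero : Series (fun _ => 0) = 0.
Proof.
  rewrite <- (Series_ext (fun n => 0 * 0)) by (intros; ring).
  rewrite (Series_scal_l 0 (fun _ => 0)). ring.
Qed.

Lemma Series_nonneg (a : nat -> R) : (forall n, 0 <= a n) -> ex_series a -> 0 <= Series a.
Proof.
  intros H E. rewrite <- Series_zero. apply Series_le; auto. intros; split; [lra|auto].
Qed.

Lemma Series_ge_partial (a : nat -> R) (N : nat) :
  (forall n, 0 <= a n) -> ex_series a -> sum_f_R0 a N <= Series a.
Proof.
  intros H E. rewrite (Series_incr_n a (S N)) by (lia || auto). simpl pred.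
  assert (0 <= Series (fun k => a (S N + k)%nat)).
  { apply Series_nonneg; auto. apply ex_series_incr_n. auto. }
  lra.
Qed.

Lemma bernoulli (d : R) (n : nat) : 0 <= d <= 1 -> 1 - INR n * d <= (1 - d) ^ n.
Proof.
  intros Hd. induction n.
  - simpl; lra.
  - rewrite S_INR. simpl.
    assert (0 <= INR n) by apply pos_INR.
    assert (0 <= (1-d)^n) by (apply pow_le; lra).
    nra.
Qed.

Lemma pow_anti (x : R) (m n : nat) : 0 <= x <= 1 -> (m <= n)%nat -> x ^ n <= x ^ m.
Proof.
  intros Hx Hmn. induction Hmn. lra.
  simpl. assert (0 <= x ^ m0) by (apply pow_le; lra). nra.
Qed.

Definition sterm (beta rho : R) (n : nat) : R := rho ^ (S n) / (INR (S n) + beta).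
Definition sfun (beta rho : R) : R := Series (sterm beta rho).

Lemma sterm_bound beta rho s n : 0 < beta -> Rabs rho <= s -> s <= 1 ->
  Rabs (sterm beta rho n) <= s ^ n.
Proof.
  intros Hb Hr Hs. unfold sterm.
  assert (1 <= INR (S n) + beta) by (rewrite S_INR; pose proof (pos_INR n); lra).
  rewrite Rabs_div by lra. rewrite (Rabs_right (INR (S n) + beta)) by lra.
  rewrite <- RPow_abs.
  assert (Rabs rho ^ S n <= s ^ S n) by (apply pow_incr; split; [apply Rabs_pos|auto]).
  assert (0 <= Rabs rho ^ S n) by (apply pow_le, Rabs_pos).
  assert (s ^ S n <= s ^ n) by (apply pow_anti; [split; [pose proof (Rabs_pos rho); lra|lra]|lia]).
  apply Rle_trans with (Rabs rho ^ S n). 2: lra.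
  unfold Rdiv. rewrite <- (Rmult_1_r (Rabs rho ^ S n)) at 2.
  apply Rmult_le_compat_l; auto. rewrite <- Rinv_1. apply Rinv_le_contravar; lra.
Qed.

Lemma ex_sterm beta rho : 0 < beta -> Rabs rho < 1 -> ex_series (sterm beta rho).
Proof.
  intros Hb Hr. apply (@ex_series_le R_AbsRing R_CompleteNormedModule _ (fun n => Rabs rho ^ n)).
  - intros n. apply sterm_bound; auto; lra.
  - apply ex_series_geom. rewrite Rabs_Rabsolu; auto.
Qed.

Lemma sterm_nonneg beta rho n : 0 < beta -> 0 <= rho -> 0 <= sterm beta rho n.
Proof.
  intros. unfold sterm. apply Rdiv_le_0_compat. apply pow_le; auto.
  rewrite S_INR; pose proof (pos_INR n); lra.
Qed.

Lemma pow_diff_bound (x y s : R) (n : nat) : Rabs x <= s -> Rabs y <= s ->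
  Rabs (x ^ S n - y ^ S n) <= INR (S n) * s ^ n * Rabs (x - y).
Proof.
  intros Hx Hy. induction n.
  - simpl. rewrite !Rmult_1_r. lra.
  - replace (x ^ S (S n) - y ^ S (S n)) with (x * (x ^ S n - y ^ S n) + y ^ S n * (x - y)) by (simpl; ring).
    eapply Rle_trans. apply Rabs_triang. rewrite !Rabs_mult.
    rewrite <- RPow_abs.
    assert (0 <= s) by (pose proof (Rabs_pos x); lra).
    assert (Rabs y ^ S n <= s ^ S n) by (apply pow_incr; split; [apply Rabs_pos|auto]).
    assert (0 <= Rabs (x-y)) by apply Rabs_pos.
    assert (0 <= Rabs (x ^ S n - y ^ S n)) by apply Rabs_pos.
    assert (0 <= s ^ n) by (apply pow_le; auto).
    pose proof (Rabs_pos x).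
    rewrite (S_INR (S n)). simpl (s ^ S n). 
    assert (Rabs x * Rabs (x ^ S n - y ^ S n) <= s * (INR (S n) * s ^ n * Rabs (x - y))).
    { apply Rmult_le_compat; auto. }
    assert (Rabs y ^ S n * Rabs (x - y) <= s ^ S n * Rabs (x - y)) by (apply Rmult_le_compat_r; auto).
    simpl (s ^ S n) in *. nra.
Qed.

Lemma sfun_lip beta x y s : 0 < beta -> Rabs x <= s -> Rabs y <= s -> s < 1 ->
  Rabs (sfun beta x - sfun beta y) <= Rabs (x - y) / (1 - s).
Proof.
  intros Hb Hx Hy Hs. unfold sfun.
  assert (Hs0 : 0 <= s) by (pose proof (Rabs_pos x); lra).
  assert (Ex := ex_sterm beta x Hb ltac:(lra)).
  assert (Ey := ex_sterm beta y Hb ltac:(lra)).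
  rewrite <- Series_minus by auto.
  assert (Hd : forall n, Rabs (sterm beta x n - sterm beta y n) <= Rabs (x - y) * s ^ n).
  { intros n. unfold sterm.
    replace (x ^ S n / (INR (S n) + beta) - y ^ S n / (INR (S n) + beta))
      with ((x ^ S n - y ^ S n) / (INR (S n) + beta)) by (field; rewrite S_INR; pose proof (pos_INR n); lra).
    assert (HP : 0 < INR (S n) + beta) by (rewrite S_INR; pose proof (pos_INR n); lra).
    rewrite Rabs_div by lra. rewrite (Rabs_right (INR (S n) + beta)) by lra.
    apply Rle_trans with (INR (S n) * s ^ n * Rabs (x - y) / (INR (S n) + beta)).
    { unfold Rdiv. apply Rmult_le_compat_r. left; apply Rinv_0_lt_compat; lra.
      apply pow_diff_bound; auto. }
    assert (0 <= s ^ n * Rabs (x-y)) by (apply Rmult_le_pos; [apply pow_le; auto|apply Rabs_pos]).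
    assert (0 < INR (S n)) by (apply lt_0_INR; lia).
    apply Rle_trans with (s ^ n * Rabs (x - y)); [|lra].
    replace (INR (S n) * s ^ n * Rabs (x - y) / (INR (S n) + beta)) with
       ((s ^ n * Rabs (x - y)) * (INR (S n) / (INR (S n) + beta))) by (field; lra).
    rewrite <- (Rmult_1_r (s ^ n * Rabs (x-y))) at 2.
    apply Rmult_le_compat_l; auto.
    apply Rmult_le_reg_r with (INR (S n) + beta); auto. unfold Rdiv. rewrite Rmult_assoc, Rinv_l by lra. lra. }
  assert (Eg : ex_series (fun n => Rabs (x - y) * s ^ n)).
  { apply (@ex_series_scal_l R_AbsRing R_NormedModule (Rabs (x - y)) (fun n => s ^ n)). apply ex_series_geom. rewrite Rabs_right; lra. }
  eapply Rle_trans. apply Series_Rabs.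
  { apply (@ex_series_le R_AbsRing R_CompleteNormedModule _ (fun n => Rabs (x - y) * s ^ n)). 2: exact Eg.
    intros n. change (Rabs (Rabs (sterm beta x n - sterm beta y n)) <= Rabs (x - y) * s ^ n).
    rewrite Rabs_Rabsolu. apply Hd. }
  eapply Rle_trans. apply Series_le. 2: exact Eg. intros n; split; [apply Rabs_pos| apply Hd].
  rewrite Series_scal_l. rewrite Series_geom by (rewrite Rabs_right; lra). unfold Rdiv. lra.
Qed.

Lemma sfun_cont beta x : 0 < beta -> Rabs x < 1 -> continuity_pt (sfun beta) x.
Proof.
  intros Hb Hx. intros eps Heps.
  set (s := (1 + Rabs x) / 2).
  exists (Rmin (s - Rabs x) (eps * (1 - s))). split.
  { apply Rmin_pos; unfold s; nra. }
  intros y [_ Hy]. simpl in Hy. unfold Rdist in Hy |- *. unfold R_dist in *.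
  assert (Hy1 : Rabs (y - x) < s - Rabs x) by (eapply Rlt_le_trans; [exact Hy| apply Rmin_l]).
  assert (Hy2 : Rabs (y - x) < eps * (1 - s)) by (eapply Rlt_le_trans; [exact Hy| apply Rmin_r]).
  assert (Rabs y <= s).
  { pose proof (Rabs_triang_inv y x). lra. }
  eapply Rle_lt_trans. apply (sfun_lip beta y x s); unfold s in *; auto; lra.
  apply Rmult_lt_reg_r with (1 - s). unfold s; lra.
  unfold Rdiv. rewrite Rmult_assoc, Rinv_l by (unfold s; lra). lra.
Qed.

Lemma sfun_incr beta x y : 0 < beta -> 0 <= x -> x < y -> y < 1 -> sfun beta x < sfun beta y.
Proof.
  intros Hb Hx Hxy Hy. unfold sfun.
  assert (Ex := ex_sterm beta x Hb ltac:(rewrite Rabs_right; lra)).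
  assert (Ey := ex_sterm beta y Hb ltac:(rewrite Rabs_right; lra)).
  cut (0 < Series (fun n => sterm beta y n - sterm beta x n)).
  { rewrite Series_minus by auto. lra. }
  assert (Ed : ex_series (fun n => sterm beta y n - sterm beta x n)) by (apply exR_minus; auto).
  rewrite Series_incr_1 by auto.
  assert (Hn : forall n, 0 <= sterm beta y n - sterm beta x n).
  { intros n. unfold sterm. assert (0 < INR (S n) + beta) by (rewrite S_INR; pose proof (pos_INR n); lra).
    assert (x ^ S n <= y ^ S n) by (apply pow_incr; lra).
    unfold Rdiv. rewrite <- Rmult_minus_distr_r. apply Rmult_le_pos. lra. left; apply Rinv_0_lt_compat; lra. }
  assert (0 <= Series (fun k => sterm beta y (S k) - sterm beta x (S k))).
  { apply Series_nonneg. intros; apply Hn. apply (ex_series_incr_1 (fun n => sterm beta y n - sterm beta x n)). auto. }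
  assert (0 < sterm beta y 0 - sterm beta x 0).
  { unfold sterm. simpl. assert (0 < 1 + beta) by lra.
    replace (INR 1) with 1 by reflexivity.
    unfold Rdiv. rewrite <- Rmult_minus_distr_r. apply Rmult_lt_0_compat. lra. apply Rinv_0_lt_compat; lra. }
  lra.
Qed.

Lemma sfun_le beta x y : 0 < beta -> 0 <= x -> x <= y -> y < 1 -> sfun beta x <= sfun beta y.
Proof.
  intros. destruct (Req_dec x y). subst; lra. left; apply sfun_incr; lra.
Qed.

Lemma sfun_0 beta : sfun beta 0 = 0.
Proof.
  unfold sfun. rewrite <- Series_zero at 2. apply Series_ext. intros n. unfold sterm. simpl. unfold Rdiv. ring.
Qed.

Lemma harm_ln (N : nat) : ln (INR N + 2) <= sum_f_R0 (fun n => / (INR n + 1)) N.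
Proof.
  assert (Hl : forall x, 0 < x -> ln (1 + x) < x).
  { intros x Hx. rewrite <- (ln_exp x) at 2. apply ln_increasing. lra. apply exp_ineq1. lra. }
  induction N.
  - simpl. replace (0 + 2) with (1 + 1) by ring. replace (/ (0 + 1)) with 1 by field.
    left; apply Hl; lra.
  - replace (sum_f_R0 _ (S N)) with (sum_f_R0 (fun n => /(INR n + 1)) N + /(INR (S N) + 1)) by reflexivity.
    rewrite !S_INR.
    pose proof (pos_INR N).
    replace (INR N + 1 + 2) with ((INR N + 2) * (1 + / (INR N + 2))) by (field; lra).
    assert (0 < / (INR N + 2)) by (apply Rinv_0_lt_compat; lra).
    rewrite ln_mult by lra.
    assert (ln (1 + / (INR N + 2)) < / (INR N + 2)) by (apply Hl, Rinv_0_lt_compat; lra).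
    replace (INR N + 1 + 1) with (INR N + 2) by ring. lra.
Qed.

Lemma harm_big (L : R) : exists N, L < sum_f_R0 (fun n => / (INR n + 1)) N.
Proof.
  destruct (INR_archimed 1 (exp L)) as [N HN]; [lra|].
  exists N. eapply Rlt_le_trans; [|apply harm_ln].
  rewrite <- (ln_exp L) at 1. apply ln_increasing. apply exp_pos. lra.
Qed.

Lemma sfun_big beta L : 0 < beta -> exists s, 0 < s < 1 /\ L < sfun beta s.
Proof.
  intros Hb.
  destruct (harm_big (2 * (1 + beta) * L)) as [N HN].
  set (s := 1 - / (2 * INR (S N))).
  assert (HSN : 1 <= INR (S N)) by (rewrite S_INR; pose proof (pos_INR N); lra).
  assert (Hs : 0 < s < 1).
  { unfold s. split. apply Rlt_0_minus. rewrite <- Rinv_1. apply Rinv_lt_contravar; lra.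
    assert (0 < / (2 * INR (S N))) by (apply Rinv_0_lt_compat; lra). lra. }
  exists s. split; auto.
  assert (Hp : 1/2 <= s ^ S N).
  { eapply Rle_trans. 2: apply bernoulli. unfold s.
    replace (INR (S N) * / (2 * INR (S N))) with (1/2) by (field; lra). lra.
    split. left; apply Rinv_0_lt_compat; lra. rewrite <- Rinv_1. apply Rinv_le_contravar; lra. }
  unfold sfun. eapply Rlt_le_trans. 2: apply (Series_ge_partial _ N).
  2: intros; apply sterm_nonneg; lra.
  2: apply ex_sterm; auto; rewrite Rabs_right; lra.
  apply Rlt_le_trans with (sum_f_R0 (fun n => / (INR n + 1) * / (2 * (1 + beta))) N).
  { rewrite <- scal_sum. 
    apply Rmult_lt_reg_l with (2 * (1 + beta)). lra.
    rewrite <- Rmult_assoc. rewrite Rinv_r by lra. lra. }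
  apply sum_Rle. intros n Hn. rewrite Rmult_comm. unfold sterm.
  assert (s ^ S N <= s ^ S n) by (apply pow_anti; [lra|lia]).
  pose proof (pos_INR n).
  assert (INR (S n) + beta <= (1 + beta) * (INR n + 1)) by (rewrite S_INR; nra).
  unfold Rdiv.
  apply Rle_trans with (1/2 * / ((1 + beta) * (INR n + 1))).
  { rewrite Rinv_mult. right; field. split; lra. }
  apply Rmult_le_compat. lra. left; apply Rinv_0_lt_compat; nra. lra.
  apply Rinv_le_contravar. rewrite S_INR; lra. auto.
Qed.

Definition E (x : R) : C := (cos x, sin x).

Fixpoint csum (f : nat -> C) (n : nat) : C :=
  match n with O => RtoC 0 | S m => Cplus (csum f m) (f m) end.
Fixpoint rsum (f : nat -> R) (n : nat) : R :=
  match n with O => 0 | S m => rsum f m + f m end.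

Lemma E_add x y : E (x + y) = Cmult (E x) (E y).
Proof. unfold E, Cmult; simpl. rewrite cos_plus, sin_plus. f_equal; ring. Qed.

Lemma E_0 : E 0 = RtoC 1.
Proof. unfold E, RtoC. rewrite cos_0, sin_0. reflexivity. Qed.

Lemma E_pow x j : Cpow (E x) j = E (INR j * x).
Proof.
  induction j. simpl. rewrite Rmult_0_l, E_0. reflexivity.
  rewrite Cpow_S, IHj, <- E_add. f_equal. rewrite S_INR. ring.
Qed.

Lemma Cmod_E x : Cmod (E x) = 1.
Proof. unfold Cmod, E; simpl. rewrite Rmult_1_r, Rmult_1_r. pose proof (sin2_cos2 x). unfold Rsqr in H. rewrite Rplus_comm, H. apply sqrt_1. Qed.

Lemma E_conj x : Cconj (E x) = E (- x).
Proof. unfold Cconj, E; simpl. rewrite cos_neg, sin_neg. reflexivity. Qed.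

Lemma E_2PIk (k : nat) : E (2 * PI * INR k) = RtoC 1.
Proof.
  unfold E, RtoC. replace (2 * PI * INR k) with (0 + 2 * INR k * PI) by ring.
  rewrite cos_period, sin_period, cos_0, sin_0. reflexivity.
Qed.

Lemma csum_ext f g n : (forall j, (j < n)%nat -> f j = g j) -> csum f n = csum g n.
Proof. induction n; intros H; simpl; auto. rewrite IHn by (intros; apply H; lia). rewrite H by lia. auto. Qed.
Lemma rsum_ext f g n : (forall j, (j < n)%nat -> f j = g j) -> rsum f n = rsum g n.
Proof. induction n; intros H; simpl; auto. rewrite IHn by (intros; apply H; lia). rewrite H by lia. auto. Qed.

Lemma csum_plus f g n : csum (fun j => Cplus (f j) (g j)) n = Cplus (csum f n) (csum g n).
Proof. induction n; simpl. apply injective_projections; simpl; ring. rewrite IHn. ring. Qed.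
Lemma csum_scal c f n : csum (fun j => Cmult c (f j)) n = Cmult c (csum f n).
Proof. induction n; simpl. apply injective_projections; simpl; ring. rewrite IHn. ring. Qed.
Lemma csum_const c n : csum (fun _ => c) n = Cmult (RtoC (INR n)) c.
Proof. induction n; simpl csum. apply injective_projections; simpl; ring. rewrite IHn, S_INR.
  apply injective_projections; simpl; ring. Qed.
Lemma csum_swap (F : nat -> nat -> C) N K :
  csum (fun j => csum (fun k => F j k) K) N = csum (fun k => csum (fun j => F j k) N) K.
Proof.
  induction N; simpl.
  - induction K; simpl; auto. rewrite <- IHK. apply injective_projections; simpl; ring.
  - rewrite IHN. rewrite <- csum_plus. auto.
Qed.
Lemma csum_single f n k0 : (k0 < n)%nat -> (forall k, (k < n)%nat -> k <> k0 -> f k = RtoC 0) ->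
  csum f n = f k0.
Proof.
  induction n; intros Hk H. lia. simpl.
  destruct (Nat.eq_dec k0 n).
  - subst. rewrite (csum_ext f (fun _ => RtoC 0)) by (intros; apply H; lia).
    rewrite csum_const. apply injective_projections; simpl; ring.
  - rewrite IHn; [|lia|intros; apply H; lia]. rewrite (H n) by lia. apply injective_projections; simpl; ring.
Qed.
Lemma csum_fst f n : fst (csum f n) = rsum (fun j => fst (f j)) n.
Proof. induction n; simpl; auto. rewrite IHn. auto. Qed.
Lemma csum_snd f n : snd (csum f n) = rsum (fun j => snd (f j)) n.
Proof. induction n; simpl; auto. rewrite IHn. auto. Qed.

Lemma rsum_plus f g n : rsum (fun j => f j + g j) n = rsum f n + rsum g n.
Proof. induction n; simpl. ring. rewrite IHn. ring. Qed.
Lemma rsum_scal c f n : rsum (fun j => c * f j) n = c * rsum f n.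
Proof. induction n; simpl. ring. rewrite IHn. ring. Qed.
Lemma rsum_const c n : rsum (fun _ => c) n = INR n * c.
Proof. induction n; simpl rsum. simpl; ring. rewrite IHn, S_INR. ring. Qed.
Lemma rsum_le f g n : (forall j, (j < n)%nat -> f j <= g j) -> rsum f n <= rsum g n.
Proof. induction n; intros H; simpl. lra. assert (rsum f n <= rsum g n) by (apply IHn; intros; apply H; lia).
  assert (f n <= g n) by (apply H; lia). lra. Qed.

Lemma geom_csum (z : C) n : Cmult (csum (fun j => Cpow z j) n) (Cminus z (RtoC 1)) = Cminus (Cpow z n) (RtoC 1).
Proof. induction n; simpl csum. simpl. apply injective_projections; simpl; ring.
  rewrite Cmult_plus_distr_r, IHn. rewrite Cpow_S. ring. Qed.

Lemma cos_lt_1 y : 0 < y < 2 * PI -> cos y < 1.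
Proof.
  intros Hy. replace y with (2 * (y / 2)) by field. rewrite cos_2a_sin.
  assert (0 < sin (y / 2)) by (apply sin_gt_0; lra). nra.
Qed.

Lemma E_sum_zero (N t m : nat) : (t < N)%nat -> (m < N)%nat -> t <> m ->
  csum (fun j => E (INR j * (2 * PI / INR N) * (INR t - INR m))) N = RtoC 0.
Proof.
  intros Ht Hm Htm.
  assert (HN : 0 < INR N) by (apply lt_0_INR; lia).
  set (z := E (2 * PI / INR N * (INR t - INR m))).
  rewrite (csum_ext _ (fun j => Cpow z j)).
  2: { intros j _. unfold z. rewrite E_pow. f_equal. ring. }
  assert (HzN : Cpow z N = RtoC 1).
  { unfold z. rewrite E_pow. replace (INR N * (2 * PI / INR N * (INR t - INR m))) with (2 * PI * (INR t - INR m)) by (field; lra).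
    destruct (Nat.lt_ge_cases m t).
    - rewrite <- minus_INR by lia. apply E_2PIk.
    - replace (2 * PI * (INR t - INR m)) with (- (2 * PI * INR (m - t))) by (rewrite minus_INR by lia; ring).
      rewrite <- E_conj, E_2PIk. unfold Cconj, RtoC; simpl. f_equal; ring. }
  assert (Hz1 : Cminus z (RtoC 1) <> RtoC 0).
  { intros Heq. assert (Hf : cos (2 * PI / INR N * (INR t - INR m)) = 1).
    { assert (H' := f_equal fst Heq). unfold z, E in H'. simpl in H'. lra. }
    set (d := INR t - INR m) in *.
    assert (Hd : 1 <= Rabs d /\ Rabs d < INR N).
    { unfold d. destruct (Nat.lt_ge_cases m t).
      - rewrite <- minus_INR by lia. rewrite Rabs_right by (apply Rle_ge, pos_INR). split.
        apply (le_INR 1); lia. apply lt_INR; lia.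
      - rewrite Rabs_left1. 2: { assert (INR t <= INR m) by (apply le_INR; lia). lra. }
        replace (- (INR t - INR m)) with (INR (m - t)) by (rewrite minus_INR by lia; ring). split.
        apply (le_INR 1); lia. apply lt_INR; lia. }
    assert (Hc : cos (Rabs (2 * PI / INR N * d)) < 1).
    { apply cos_lt_1. rewrite Rabs_mult. rewrite (Rabs_right (2 * PI / INR N)).
      2: { apply Rle_ge. unfold Rdiv. apply Rmult_le_pos. pose proof PI_RGT_0. lra. left; apply Rinv_0_lt_compat; lra. }
      pose proof PI_RGT_0. split.
      - apply Rmult_lt_0_compat. apply Rdiv_lt_0_compat; lra. lra.
      - apply Rlt_le_trans with (2 * PI / INR N * INR N). apply Rmult_lt_compat_l. apply Rdiv_lt_0_compat; lra. lra.
        right; field; lra. }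
    destruct (Rcase_abs (2 * PI / INR N * d)).
    - rewrite Rabs_left in Hc by lra. rewrite cos_neg in Hc. lra.
    - rewrite Rabs_right in Hc by lra. lra. }
  assert (Hg := geom_csum z N). rewrite HzN in Hg.
  replace (Cminus (RtoC 1) (RtoC 1)) with (RtoC 0) in Hg by (apply injective_projections; simpl; ring).
  set (S := csum (fun j => Cpow z j) N) in *.
  assert (S = Cmult (Cmult S (Cminus z (RtoC 1))) (Cinv (Cminus z (RtoC 1)))) by (field; auto).
  rewrite H, Hg. ring.
Qed.

Lemma E_sum_same (N t : nat) :
  csum (fun j => E (INR j * (2 * PI / INR N) * (INR t - INR t))) N = RtoC (INR N).
Proof.
  rewrite (csum_ext _ (fun _ => RtoC 1)). rewrite csum_const. apply injective_projections; simpl; ring.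
  intros j _. rewrite <- E_0. f_equal. ring.
Qed.

Lemma rsum_nonneg f n : (forall j, (j < n)%nat -> 0 <= f j) -> 0 <= rsum f n.
Proof. intros H. replace 0 with (rsum (fun _ => 0) n). apply rsum_le; auto.
  rewrite rsum_const; ring. Qed.

Lemma unit_cs (e : C) : Cmod e = 1 -> fst e ^ 2 + snd e ^ 2 = 1.
Proof. intros H. rewrite <- Cmod2_alt. rewrite H. ring. Qed.

Lemma cmod2 (z : C) : Cmod z ^ 2 = fst z ^ 2 + snd z ^ 2.
Proof. apply Cmod2_alt. Qed.

Lemma bessel (N : nat) (u e : nat -> C) : (0 < N)%nat ->
  (forall j, Cmod (e j) = 1) -> csum e N = RtoC 0 ->
  Cmod (csum u N) ^ 2 + Cmod (csum (fun j => Cmult (u j) (Cconj (e j))) N) ^ 2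
  <= INR N * rsum (fun j => Cmod (u j) ^ 2) N.
Proof.
  intros HN He Hs.
  assert (HNr : 0 < INR N) by (apply lt_0_INR; lia).
  set (p := fun j => fst (u j)). set (q := fun j => snd (u j)).
  set (c := fun j => fst (e j)). set (s := fun j => snd (e j)).
  assert (Hc : rsum c N = 0) by (unfold c; rewrite <- csum_fst, Hs; reflexivity).
  assert (Hsn : rsum s N = 0) by (unfold s; rewrite <- csum_snd, Hs; reflexivity).
  assert (Hcs : forall j, c j ^ 2 + s j ^ 2 = 1) by (intros; apply unit_cs, He).
  set (P1 := rsum p N). set (P2 := rsum q N).
  set (Q1 := rsum (fun j => p j * c j + q j * s j) N).
  set (Q2 := rsum (fun j => q j * c j - p j * s j) N).
  assert (E1 : fst (csum u N) = P1) by (rewrite csum_fst; reflexivity).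
  assert (E2 : snd (csum u N) = P2) by (rewrite csum_snd; reflexivity).
  assert (E3 : fst (csum (fun j => Cmult (u j) (Cconj (e j))) N) = Q1)
    by (rewrite csum_fst; apply rsum_ext; intros; unfold p, q, c, s; simpl; ring).
  assert (E4 : snd (csum (fun j => Cmult (u j) (Cconj (e j))) N) = Q2)
    by (rewrite csum_snd; apply rsum_ext; intros; unfold p, q, c, s; simpl; ring).
  rewrite !cmod2, E1, E2, E3, E4.
  rewrite (rsum_ext _ (fun j => p j ^ 2 + q j ^ 2)) by (intros; rewrite cmod2; reflexivity).
  set (A1 := P1 / INR N). set (A2 := P2 / INR N). set (B1 := Q1 / INR N). set (B2 := Q2 / INR N).
  assert (H0 : 0 <= rsum (fun j => (p j - A1 - (B1 * c j - B2 * s j)) ^ 2 + (q j - A2 - (B1 * s j + B2 * c j)) ^ 2) N).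
  { apply rsum_nonneg. intros; apply Rplus_le_le_0_compat; apply pow2_ge_0. }
  rewrite (rsum_ext _ (fun j => (p j ^ 2 + q j ^ 2) + (-2 * A1) * p j + (-2 * A2) * q j
      + (-2 * B1) * (p j * c j + q j * s j) + (-2 * B2) * (q j * c j - p j * s j)
      + (A1 ^ 2 + A2 ^ 2 + B1 ^ 2 + B2 ^ 2) + (2 * (A1 * B1 + A2 * B2)) * c j
      + (2 * (A2 * B1 - A1 * B2)) * s j)) in H0.
  2: { intros j _. assert (h := Hcs j). 
       transitivity ((p j ^ 2 + q j ^ 2) + (-2 * A1) * p j + (-2 * A2) * q j
      + (-2 * B1) * (p j * c j + q j * s j) + (-2 * B2) * (q j * c j - p j * s j)
      + (A1 ^ 2 + A2 ^ 2 + B1 ^ 2 + B2 ^ 2) + (2 * (A1 * B1 + A2 * B2)) * c j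
      + (2 * (A2 * B1 - A1 * B2)) * s j + (B1 ^ 2 + B2 ^ 2) * (c j ^ 2 + s j ^ 2 - 1)). ring.
       rewrite h. ring. }
  rewrite !rsum_plus, !rsum_scal, !rsum_const in H0.
  fold P1 P2 Q1 Q2 in H0. rewrite Hc, Hsn in H0.
  idtac.
  set (T := rsum (fun j => p j ^ 2 + q j ^ 2) N) in *.
  assert (HT : rsum (fun j => p j ^ 2) N + rsum (fun j => q j ^ 2) N = T) by (unfold T; rewrite rsum_plus; auto).
  assert (HP1 : P1 = INR N * A1) by (unfold A1; field; lra).
  assert (HP2 : P2 = INR N * A2) by (unfold A2; field; lra).
  assert (HQ1 : Q1 = INR N * B1) by (unfold B1; field; lra).
  assert (HQ2 : Q2 = INR N * B2) by (unfold B2; field; lra).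
  clearbody A1 A2 B1 B2. rewrite HP1, HP2, HQ1, HQ2 in *.
  rewrite HT in H0. nra.
Qed.

Lemma norm_sum (N : nat) (X Y : C) (e : nat -> C) :
  (forall j, Cmod (e j) = 1) -> csum e N = RtoC 0 ->
  rsum (fun j => Cmod (Cplus X (Cmult Y (e j))) ^ 2) N = INR N * (Cmod X ^ 2 + Cmod Y ^ 2).
Proof.
  intros He Hs.
  set (c := fun j => fst (e j)). set (s := fun j => snd (e j)).
  assert (Hc : rsum c N = 0) by (unfold c; rewrite <- csum_fst, Hs; reflexivity).
  assert (Hsn : rsum s N = 0) by (unfold s; rewrite <- csum_snd, Hs; reflexivity).
  assert (Hcs : forall j, c j ^ 2 + s j ^ 2 = 1) by (intros; apply unit_cs, He).
  rewrite (rsum_ext _ (fun j => (fst X ^ 2 + snd X ^ 2 + (fst Y ^ 2 + snd Y ^ 2))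
     + (2 * (fst X * fst Y + snd X * snd Y)) * c j + (2 * (snd X * fst Y - fst X * snd Y)) * s j)).
  2: { intros j _. rewrite cmod2. assert (h := Hcs j). unfold c, s in *. simpl.
       transitivity (fst X ^ 2 + snd X ^ 2 + (fst Y ^ 2 + snd Y ^ 2) +
        2 * (fst X * fst Y + snd X * snd Y) * fst (e j) +
        2 * (snd X * fst Y - fst X * snd Y) * snd (e j) + (fst Y ^ 2 + snd Y ^ 2) * (fst (e j) ^ 2 + snd (e j) ^ 2 - 1)).
       ring. rewrite h. ring. }
  rewrite !rsum_plus, !rsum_scal, !rsum_const, Hc, Hsn, !cmod2. ring.
Qed.

Lemma RtoC_pow r k : Cpow (RtoC r) k = RtoC (r ^ k).
Proof. induction k; simpl. reflexivity. rewrite IHk. apply injective_projections; simpl; ring. Qed.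

Lemma pow_w r a k : Cpow (Cmult (RtoC r) (E a)) k = Cmult (RtoC (r ^ k)) (E (INR k * a)).
Proof. rewrite Cpow_mult_l, RtoC_pow, E_pow. reflexivity. Qed.

Lemma E_eq a b : a = b -> E a = E b.
Proof. intros ->; auto. Qed.

Lemma Esum (N t m : nat) : (t < N)%nat -> (m < N)%nat ->
  csum (fun j => E (INR j * (2 * PI / INR N) * (INR t - INR m))) N =
  if Nat.eq_dec t m then RtoC (INR N) else RtoC 0.
Proof.
  intros. destruct (Nat.eq_dec t m). subst. apply E_sum_same. apply E_sum_zero; auto.
Qed.

Lemma Cmod_RtoC_mult (a : R) (z : C) : 0 <= a -> Cmod (Cmult (RtoC a) z) = a * Cmod z.
Proof. intros. rewrite Cmod_mult, Cmod_R, Rabs_right; lra. Qed.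

Lemma fourier_ineq (b : nat -> C) (x y : C) (r eps : R) (n K : nat) :
  0 <= r -> (1 <= n)%nat -> (n < K)%nat -> 0 <= eps ->
  (forall w, Cmod w = r -> Cmod (csum (fun k => Cmult (b k) (Cpow w k)) K) <= 1 + eps) ->
  Cmod (Cmult x (b 0%nat)) ^ 2 + Cmod (Cmult (Cplus (Cmult x (b n)) (Cmult y (b 0%nat))) (RtoC (r ^ n))) ^ 2
  <= (1 + eps) ^ 2 * (Cmod x ^ 2 + Cmod (Cmult y (RtoC (r ^ n))) ^ 2).
Proof.
  intros Hr Hn HK Heps HP.
  set (N := (K + n + 1)%nat).
  assert (HN : (0 < N)%nat) by (unfold N; lia).
  assert (HNr : 0 < INR N) by (apply lt_0_INR; lia).
  set (th := 2 * PI / INR N).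
  set (w := fun j => Cmult (RtoC r) (E (INR j * th))).
  set (e := fun j => E (INR j * th * (INR n - INR 0))).
  set (P := fun j => csum (fun k => Cmult (b k) (Cpow (w j) k)) K).
  set (u := fun j => Cmult (Cplus x (Cmult y (Cpow (w j) n))) (P j)).
  set (A := fun k => Cmult x (Cmult (b k) (RtoC (r ^ k)))).
  set (B := fun k => Cmult y (Cmult (b k) (RtoC (r ^ (n + k))))).
  assert (Hu : forall j, u j = csum (fun k => Cplus (Cmult (A k) (E (INR j * th * (INR k - INR 0))))
                                   (Cmult (B k) (E (INR j * th * (INR (n + k) - INR 0))))) K).
  { intros j. unfold u, P. rewrite <- csum_scal. apply csum_ext. intros k _.
    unfold w. rewrite !pow_w.
    rewrite (E_eq (INR j * th * (INR (n + k) - INR 0)) (INR n * (INR j * th) + INR k * (INR j * th)))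
      by (rewrite plus_INR; simpl; ring).
    rewrite E_add.
    rewrite (E_eq (INR j * th * (INR k - INR 0)) (INR k * (INR j * th))) by (simpl; ring).
    unfold A, B. rewrite pow_add, RtoC_mult. ring. }
  assert (Hsum1 : csum u N = Cmult (RtoC (INR N)) (Cmult x (b 0%nat))).
  { rewrite (csum_ext u _ N (fun j _ => Hu j)). rewrite csum_swap.
    rewrite (csum_single _ K 0) by (lia || (intros k Hk Hk0; rewrite csum_plus, !csum_scal;
      unfold th; rewrite !Esum by (unfold N; lia);
      destruct (Nat.eq_dec k 0); [lia|]; destruct (Nat.eq_dec (n + k) 0); [lia|];
      apply injective_projections; simpl; ring)).
    rewrite csum_plus, !csum_scal. unfold th; rewrite !Esum by (unfold N; lia).
    destruct (Nat.eq_dec 0 0); [|lia]. destruct (Nat.eq_dec (n + 0) 0); [lia|].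
    unfold A. simpl pow. apply injective_projections; simpl; ring. }
  assert (Hsum2 : csum (fun j => Cmult (u j) (Cconj (e j))) N =
       Cmult (RtoC (INR N)) (Cmult (Cplus (Cmult x (b n)) (Cmult y (b 0%nat))) (RtoC (r ^ n)))).
  { rewrite (csum_ext _ (fun j => csum (fun k => Cplus (Cmult (A k) (E (INR j * th * (INR k - INR n))))
                                   (Cmult (B k) (E (INR j * th * (INR (n + k) - INR n))))) K)).
    2: { intros j _. rewrite Hu. rewrite Cmult_comm, <- csum_scal. apply csum_ext. intros k _.
         unfold e. rewrite E_conj.
         rewrite (E_eq (INR j * th * (INR k - INR n)) (INR j * th * (INR k - INR 0) + - (INR j * th * (INR n - INR 0)))) by (simpl; ring).
         rewrite (E_eq (INR j * th * (INR (n + k) - INR n)) (INR j * th * (INR (n + k) - INR 0) + - (INR j * th * (INR n - INR 0)))) by (simpl; ring).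
         rewrite !E_add. ring. }
    rewrite csum_swap. rewrite (csum_ext _ (fun k => Cplus (Cmult (A k) (csum (fun j => E (INR j * th * (INR k - INR n))) N))
        (Cmult (B k) (csum (fun j => E (INR j * th * (INR (n + k) - INR n))) N)))).
    2: { intros k _. rewrite csum_plus, !csum_scal. reflexivity. }
    rewrite csum_plus.
    rewrite (csum_single _ K n) by (lia || (intros k Hk Hk0; unfold th; rewrite Esum by (unfold N; lia);
      destruct (Nat.eq_dec k n); [lia|]; apply injective_projections; simpl; ring)).
    rewrite (csum_single _ K 0) by (lia || (intros k Hk Hk0; unfold th; rewrite Esum by (unfold N; lia);
      destruct (Nat.eq_dec (n + k) n); [lia|]; apply injective_projections; simpl; ring)).
    unfold th; rewrite !Esum by (unfold N; lia).
    destruct (Nat.eq_dec n n); [|lia]. destruct (Nat.eq_dec (n + 0) n); [|lia].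
    unfold A, B. rewrite Nat.add_0_r. apply injective_projections; simpl; ring. }
  assert (He1 : forall j, Cmod (e j) = 1) by (intros; apply Cmod_E).
  assert (He0 : csum e N = RtoC 0) by (unfold e, th; apply E_sum_zero; unfold N; lia).
  assert (HB := bessel N u e HN He1 He0).
  rewrite Hsum1, Hsum2 in HB.
  rewrite !Cmod_RtoC_mult in HB by lra.
  assert (Hup : forall j, (j < N)%nat -> Cmod (u j) ^ 2 <= (1 + eps) ^ 2 * Cmod (Cplus x (Cmult (Cmult y (RtoC (r ^ n))) (e j))) ^ 2).
  { intros j _. unfold u. rewrite Cmod_mult.
    replace (Cmult y (Cpow (w j) n)) with (Cmult (Cmult y (RtoC (r ^ n))) (e j)).
    2: { unfold w, e. rewrite pow_w. rewrite (E_eq (INR n * (INR j * th)) (INR j * th * (INR n - INR 0))) by (simpl; ring). ring. }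
    assert (Cmod (P j) <= 1 + eps).
    { apply HP. unfold w. rewrite Cmod_RtoC_mult, Cmod_E by auto. ring. }
    assert (0 <= Cmod (P j)) by apply Cmod_ge_0.
    assert (0 <= Cmod (Cplus x (Cmult (Cmult y (RtoC (r ^ n))) (e j)))) by apply Cmod_ge_0.
    rewrite Rpow_mult_distr. rewrite Rmult_comm. apply Rmult_le_compat_r. apply pow2_ge_0.
    apply pow_incr. lra. }
  assert (HS := rsum_le _ _ N Hup).
  rewrite rsum_scal, norm_sum in HS by auto.
  assert (HN2 : 0 < INR N * INR N) by nra.
  apply Rmult_le_reg_l with (INR N * INR N); auto.
  assert (Hx : INR N * (INR N * ((1 + eps) ^ 2 * (Cmod x ^ 2 + Cmod (Cmult y (RtoC (r ^ n))) ^ 2))) =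
     INR N * INR N * ((1 + eps) ^ 2 * (Cmod x ^ 2 + Cmod (Cmult y (RtoC (r ^ n))) ^ 2))) by ring.
  nra.
Qed.

Lemma csum_sum_n (a : nat -> C) m : csum a (S m) = sum_n a m.
Proof.
  induction m. simpl. rewrite sum_O. apply injective_projections; simpl; ring.
  rewrite sum_Sn, <- IHm. reflexivity.
Qed.

Lemma terms_small (t : nat -> C) (l : C) : is_series t l ->
  exists K0, forall k, (K0 <= k)%nat -> Cmod (t k) <= 1.
Proof.
  intros H. unfold is_series in H.
  apply (filterlim_locally_ball_norm (K := C_AbsRing)) with (eps := mkposreal (1/2) ltac:(lra)) in H.
  destruct H as [N HN]. exists (S N). intros k Hk.
  destruct k as [|m]. lia.
  assert (H1 := HN m ltac:(lia)). assert (H2 := HN (S m) ltac:(lia)).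
  unfold ball_norm in H1, H2.
  rewrite sum_Sn in H2.
  set (c := sum_n t m) in *.
  change (Cmod (Cminus (Cplus c (t (S m))) l) < 1/2) in H2.
  change (Cmod (Cminus c l) < 1/2) in H1.
  replace (t (S m)) with (Cminus (Cminus (Cplus c (t (S m))) l) (Cminus c l)) by ring.
  eapply Rle_trans. unfold Cminus at 1. apply Cmod_triangle. rewrite Cmod_opp. lra.
Qed.

Lemma abs_conv (b : nat -> C) (G : C -> C) :
  (forall w, Cmod w < 1 -> is_series (fun k => Cmult (b k) (Cpow w k)) (G w)) ->
  forall r, 0 <= r < 1 -> ex_series (fun k => Cmod (b k) * r ^ k).
Proof.
  intros HG r Hr.
  set (r' := (1 + r) / 2).
  assert (Hr' : Cmod (RtoC r') < 1) by (rewrite Cmod_R, Rabs_right; unfold r'; lra).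
  destruct (terms_small _ _ (HG _ Hr')) as [K0 HK].
  apply (ex_series_incr_n _ K0).
  set (q := r / r').
  assert (Hq : 0 <= q < 1) by (unfold q, r'; split; [apply Rdiv_le_0_compat; lra| apply Rmult_lt_reg_r with ((1+r)/2); [lra|]; unfold Rdiv; rewrite Rmult_assoc, Rinv_l; lra]).
  apply (exR_le _ (fun k => q ^ K0 * q ^ k)).
  2: { apply exR_scal. apply ex_series_geom. rewrite Rabs_right; lra. }
  intros k. assert (h := HK (K0 + k)%nat ltac:(lia)).
  rewrite Cmod_mult, Cmod_pow, Cmod_R, Rabs_right in h by (unfold r'; lra).
  rewrite <- pow_add. rewrite Rabs_right.
  2: { apply Rle_ge, Rmult_le_pos. apply Cmod_ge_0. apply pow_le; lra. }
  replace r with (q * r') by (unfold q, r'; field; lra).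
  rewrite Rpow_mult_distr.
  assert (0 <= q ^ (K0 + k)) by (apply pow_le; lra).
  replace (Cmod (b (K0 + k)%nat) * (q ^ (K0 + k) * r' ^ (K0 + k))) with (q ^ (K0 + k) * (Cmod (b (K0 + k)%nat) * r' ^ (K0 + k))) by ring.
  rewrite <- (Rmult_1_r (q ^ (K0 + k))) at 2. apply Rmult_le_compat_l; auto.
Qed.

Lemma tail_bound (t : nat -> C) (l : C) : is_series t l -> ex_series (fun k => Cmod (t k)) ->
  Cmod l <= Series (fun k => Cmod (t k)).
Proof.
  intros Ht Ha.
  assert (H1 : is_lim_seq (fun n => norm (sum_n t n)) (norm l)).
  { unfold is_lim_seq. simpl. eapply filterlim_comp. exact Ht. apply filterlim_norm. }
  assert (H2 : is_lim_seq (fun _ : nat => Series (fun k => Cmod (t k))) (Series (fun k => Cmod (t k)))) by apply is_lim_seq_const.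
  assert (Hle : forall n, norm (sum_n t n) <= Series (fun k => Cmod (t k))).
  { intros n. apply (Rle_trans _ (sum_n (fun k => norm (t k)) n)). exact (norm_sum_n_m t 0 n).
    change (sum_n (fun k => norm (t k)) n <= Series (fun k => Cmod (t k))).
    rewrite sum_n_Reals. apply Series_ge_partial. intros; apply Cmod_ge_0. auto. }
  assert (H3 := is_lim_seq_le _ _ _ _ Hle H1 H2). exact H3.
Qed.

Lemma unif_approx (b : nat -> C) (G : C -> C) :
  (forall w, Cmod w < 1 -> is_series (fun k => Cmult (b k) (Cpow w k)) (G w)) ->
  forall r eps, 0 <= r < 1 -> 0 < eps -> exists K0, forall K, (K0 <= K)%nat -> forall w, Cmod w <= r ->
    Cmod (Cminus (G w) (csum (fun k => Cmult (b k) (Cpow w k)) K)) <= eps.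
Proof.
  intros HG r eps Hr He.
  set (A := fun k => Cmod (b k) * r ^ k).
  assert (HA : ex_series A) by (apply (abs_conv b G HG r Hr)).
  assert (Hl : is_lim_seq (sum_n A) (Series A)) by exact (Series_correct A HA).
  apply is_lim_seq_Reals in Hl. destruct (Hl eps He) as [K1 HK1].
  exists (S K1). intros K HK w Hw.
  destruct K as [|K']. lia.
  assert (Hw1 : Cmod w < 1) by lra.
  set (t := fun k => Cmult (b k) (Cpow w k)).
  assert (Ht : is_series (fun k => t (S K' + k)%nat) (Cminus (G w) (csum t (S K')))).
  { apply is_series_incr_n. lia. simpl pred. rewrite <- csum_sum_n.
    assert (H0 := HG w Hw1).
    assert (Eq : G w = Cplus (Cminus (G w) (csum t (S K'))) (csum t (S K'))) by ring.
    rewrite Eq in H0. exact H0. }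
  assert (Hcmp : forall k, Cmod (t (S K' + k)%nat) <= A (S K' + k)%nat).
  { intros k. unfold t, A. rewrite Cmod_mult, Cmod_pow. apply Rmult_le_compat_l. apply Cmod_ge_0.
    apply pow_incr. split; [apply Cmod_ge_0| auto]. }
  assert (HAs : ex_series (fun k => A (S K' + k)%nat)) by (apply (ex_series_incr_n A (S K')); auto).
  assert (Hex : ex_series (fun k => Cmod (t (S K' + k)%nat))).
  { apply (exR_le _ (fun k => A (S K' + k)%nat)); auto. intros k. rewrite Rabs_right by (apply Rle_ge, Cmod_ge_0). auto. }
  eapply Rle_trans. apply tail_bound; eauto.
  eapply Rle_trans. apply Series_le; [intros k; split; [apply Cmod_ge_0| apply Hcmp] | exact HAs].
  assert (HS := Series_incr_n A (S K') ltac:(lia) HA). simpl pred in HS.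
  assert (h := HK1 K' ltac:(lia)). unfold Rdist in h. rewrite sum_n_Reals in h.
  apply Rabs_def2 in h. lra.
Qed.

Lemma lim_eps (L R0 : R) : 0 <= R0 -> (forall eps, 0 < eps -> L <= (1 + eps) ^ 2 * R0) -> L <= R0.
Proof.
  intros HR H. destruct (Rle_dec L R0) as [h|h]; auto. exfalso. apply Rnot_le_lt in h.
  set (eps := Rmin 1 ((L - R0) / (3 * R0 + 1))).
  assert (He : 0 < eps) by (apply Rmin_pos; [lra| apply Rdiv_lt_0_compat; lra]).
  assert (He1 : eps <= 1) by apply Rmin_l.
  assert (He2 : eps * (3 * R0 + 1) <= L - R0).
  { assert (eps <= (L - R0) / (3 * R0 + 1)) by apply Rmin_r.
    apply Rmult_le_compat_r with (r := 3 * R0 + 1) in H0; [|lra].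
    unfold Rdiv in H0. rewrite Rmult_assoc, Rinv_l in H0 by lra. lra. }
  assert (h2 := H eps He). nra.
Qed.

Lemma lim_r (A B : R) (m : nat) : (forall r, 0 <= r < 1 -> A + B * r ^ m <= 0) -> A + B <= 0.
Proof.
  intros H. destruct (Rle_dec (A + B) 0) as [h|h]; auto. exfalso. apply Rnot_le_lt in h.
  set (eta := A + B). assert (Heta : 0 < eta) by (unfold eta; lra).
  set (d := Rmin (1/2) (eta / (2 * (Rabs B + 1) * (INR m + 1)))).
  assert (Hm : 0 <= INR m) by apply pos_INR.
  assert (Hd0 : 0 < d). { apply Rmin_pos. lra. pose proof (Rabs_pos B). apply Rdiv_lt_0_compat. unfold eta; lra. apply Rmult_lt_0_compat; [apply Rmult_lt_0_compat|]; lra. }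
  assert (Hd1 : d <= 1/2) by apply Rmin_l.
  assert (Hd2 : d * (2 * (Rabs B + 1) * (INR m + 1)) <= eta).
  { assert (d <= eta / (2 * (Rabs B + 1) * (INR m + 1))) by apply Rmin_r.
    pose proof (Rabs_pos B).
    assert (HX : 0 < 2 * (Rabs B + 1) * (INR m + 1)) by (apply Rmult_lt_0_compat; [apply Rmult_lt_0_compat|]; lra).
    apply Rmult_le_compat_r with (r := 2 * (Rabs B + 1) * (INR m + 1)) in H0; [|lra].
    replace (eta / (2 * (Rabs B + 1) * (INR m + 1)) * (2 * (Rabs B + 1) * (INR m + 1))) with eta in H0 by (field; lra). lra. }
  assert (h1 := H (1 - d) ltac:(lra)).
  assert (hb := bernoulli d m ltac:(lra)).
  assert (hu : (1 - d) ^ m <= 1) by (apply Rle_trans with (1 ^ m); [apply pow_incr; lra | rewrite pow1; lra]).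
  assert (Habs : Rabs (B * ((1 - d) ^ m - 1)) <= Rabs B * (INR m * d)).
  { rewrite Rabs_mult. apply Rmult_le_compat_l. apply Rabs_pos.
    rewrite Rabs_left1 by lra. lra. }
  assert (B * ((1 - d) ^ m - 1) >= - (Rabs B * (INR m * d))).
  { pose proof (Rle_abs (- (B * ((1 - d) ^ m - 1)))) as Hq. rewrite Rabs_Ropp in Hq. lra. }
  pose proof (Rabs_pos B).
  assert (Rabs B * (INR m * d) < eta).
  { apply Rle_lt_trans with (d * (2 * (Rabs B + 1) * (INR m + 1)) / 2). 
    - nra. - lra. }
  unfold eta in *. nra.
Qed.

Lemma real_alg (a c : R) : 0 <= a -> 0 <= c ->
  (forall s, 0 <= s -> a ^ 2 + (c * (1 + s * a ^ 2)) ^ 2 <= 1 + (s * c * a) ^ 2) -> c <= 1 - a ^ 2.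
Proof.
  intros Ha Hc H.
  assert (H0 := H 0 ltac:(lra)).
  assert (Ha1 : a ^ 2 <= 1) by nra.
  destruct (Req_dec (a ^ 2) 1) as [E1|E1].
  - assert (H1 := H 1 ltac:(lra)). rewrite E1 in H1.
    assert (a ^ 2 = a * a) by ring. nra.
  - set (d := 1 - a ^ 2). assert (Hd : 0 < d) by (unfold d; lra).
    assert (H1 := H (/ d) ltac:(left; apply Rinv_0_lt_compat; lra)).
    replace (1 + / d * a ^ 2) with (/ d) in H1 by (unfold d; field; lra).
    set (s := / d) in *.
    assert (Hs : s * d = 1) by (unfold s; field; lra).
    assert (Hs0 : 0 < s) by (unfold s; apply Rinv_0_lt_compat; lra).
    assert (h2 : (c * s) ^ 2 * d <= d) by (unfold d in *; nra).
    assert (h3 : (c * s) ^ 2 <= 1) by nra.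
    assert (h4 : c * s <= 1) by nra.
    assert (c = c * s * d) by (rewrite Rmult_assoc, Hs; ring).
    unfold d in *. nra.
Qed.

Lemma key_ineq (b : nat -> C) (G : C -> C) :
  (forall w, Cmod w < 1 -> is_series (fun k => Cmult (b k) (Cpow w k)) (G w)) ->
  (forall w, Cmod w < 1 -> Cmod (G w) <= 1) ->
  forall n x y r, (1 <= n)%nat -> 0 <= r < 1 ->
  Cmod (Cmult x (b 0%nat)) ^ 2 + Cmod (Cmult (Cplus (Cmult x (b n)) (Cmult y (b 0%nat))) (RtoC (r ^ n))) ^ 2
  <= Cmod x ^ 2 + Cmod (Cmult y (RtoC (r ^ n))) ^ 2.
Proof.
  intros HG HB n x y r Hn Hr.
  apply lim_eps. apply Rplus_le_le_0_compat; apply pow2_ge_0.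
  intros eps He.
  destruct (unif_approx b G HG r eps Hr He) as [K0 HK0].
  set (K := Nat.max K0 (S n)).
  apply (fourier_ineq b x y r eps n K); [lra|lia|unfold K; lia|lra|].
  intros w Hw.
  assert (h := HK0 K ltac:(unfold K; lia) w ltac:(lra)).
  assert (hg := HB w ltac:(lra)).
  set (P := csum (fun k => Cmult (b k) (Cpow w k)) K) in *.
  replace P with (Cminus (G w) (Cminus (G w) P)) by ring.
  eapply Rle_trans. unfold Cminus at 1. apply Cmod_triangle. rewrite Cmod_opp. lra.
Qed.

Lemma Cmod_mult_R (z : C) (a : R) : 0 <= a -> Cmod (Cmult z (RtoC a)) = Cmod z * a.
Proof. intros. rewrite Cmod_mult, Cmod_R, Rabs_right; lra. Qed.

Theorem wiener (b : nat -> C) (G : C -> C) :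
  (forall w, Cmod w < 1 -> is_series (fun k => Cmult (b k) (Cpow w k)) (G w)) ->
  (forall w, Cmod w < 1 -> Cmod (G w) <= 1) ->
  Cmod (b 0%nat) <= 1 /\ forall n, (1 <= n)%nat -> Cmod (b n) <= 1 - Cmod (b 0%nat) ^ 2.
Proof.
  intros HG HB.
  assert (Hk := key_ineq b G HG HB).
  set (a := Cmod (b 0%nat)).
  assert (Ha : 0 <= a) by apply Cmod_ge_0.
  assert (Hmain : forall n, (1 <= n)%nat -> Cmod (b n) <= 1 - a ^ 2).
  { intros n Hn. apply real_alg; auto. apply Cmod_ge_0. intros s Hs.
    set (c := Cmod (b n)).
    set (y := Cmult (Cmult (RtoC s) (b n)) (Cconj (b 0%nat))).
    assert (Hy : Cmod y = s * c * a).
    { unfold y. rewrite !Cmod_mult, Cmod_conj, Cmod_R, Rabs_right by lra. reflexivity. }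
    assert (Hz : Cplus (Cmult (RtoC 1) (b n)) (Cmult y (b 0%nat)) = Cmult (b n) (RtoC (1 + s * a ^ 2))).
    { unfold y, a. rewrite RtoC_plus, RtoC_mult, Cmod2_conj. ring. }
    assert (Hz2 : Cmod (Cmult (b n) (RtoC (1 + s * a ^ 2))) = c * (1 + s * a ^ 2)).
    { apply Cmod_mult_R. pose proof (pow2_ge_0 a). nra. }
    assert (HL : forall r, 0 <= r < 1 ->
      (a ^ 2 - 1) + ((c * (1 + s * a ^ 2)) ^ 2 - (s * c * a) ^ 2) * r ^ (2 * n) <= 0).
    { intros r Hr. assert (h := Hk n (RtoC 1) y r Hn Hr).
      rewrite Hz in h. rewrite !Cmod_mult_R in h by (apply pow_le; lra).
      rewrite Hz2 in h. rewrite (Cmod_mult_R y) in h by (apply pow_le; lra). rewrite Hy in h. rewrite Cmult_1_l, Cmod_1 in h. fold a in h.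
      replace (r ^ (2 * n)) with ((r ^ n) ^ 2) by (rewrite <- pow_mult; f_equal; lia).
      assert (E1 : (c * (1 + s * a ^ 2) * r ^ n) ^ 2 = (c * (1 + s * a ^ 2)) ^ 2 * (r ^ n) ^ 2) by ring.
      assert (E2 : (s * c * a * r ^ n) ^ 2 = (s * c * a) ^ 2 * (r ^ n) ^ 2) by ring.
      rewrite E1, E2 in h. rewrite pow1 in h. lra. }
    assert (h := lim_r _ _ _ HL). lra. }
  split; auto.
  assert (h := Hmain 1%nat ltac:(lia)). pose proof (Cmod_ge_0 (b 1%nat)). nra.
Qed.

Lemma rho1_eq_sfun beta rho : rho1_eq beta rho = / beta - 2 * sfun beta rho.
Proof. reflexivity. Qed.

Lemma root_unique beta : 0 < beta -> exists! rho1 : R, 0 < rho1 < 1 /\ rho1_eq beta rho1 = 0.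
Proof.
  intros Hb.
  destruct (sfun_big beta (/ (2 * beta)) Hb) as [s [Hs Hbig]].
  set (f := fun x => 2 * sfun beta x - / beta).
  assert (Hc : forall a, 0 <= a <= s -> continuity_pt f a).
  { intros a Ha. unfold f.
    apply (continuity_pt_minus (mult_real_fct 2 (sfun beta)) (fun _ => / beta)).
    apply continuity_pt_scal. apply sfun_cont; auto. rewrite Rabs_right; lra.
    apply continuity_pt_const. intros x y; reflexivity. }
  assert (Hf0 : f 0 < 0).
  { unfold f. rewrite sfun_0. assert (0 < / beta) by (apply Rinv_0_lt_compat; lra). lra. }
  assert (Hfs : 0 < f s).
  { unfold f. replace (/ beta) with (2 * / (2 * beta)) by (field; lra). lra. }
  destruct (Ranalysis5.IVT_interv f 0 s Hc ltac:(lra) Hf0 Hfs) as [z [Hz Hfz]].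
  assert (Hz0 : z <> 0) by (intros ->; lra).
  exists z. split.
  - split. lra. rewrite rho1_eq_sfun. unfold f in Hfz. lra.
  - intros z' [Hz' Hf']. rewrite rho1_eq_sfun in Hf'. unfold f in Hfz.
    destruct (Rtotal_order z z') as [h|[h|h]]; auto.
    + assert (sfun beta z < sfun beta z') by (apply sfun_incr; lra). lra.
    + assert (sfun beta z' < sfun beta z) by (apply sfun_incr; lra). lra.
Qed.

Lemma bohr_eq g beta rho a n : g < 1 ->
  bohr_term g beta rho a n = Cmod (a n) * / (1 - g) ^ n * rho ^ n / (INR n + beta).
Proof.
  intros Hg. unfold bohr_term. assert (0 < (1 - g) ^ n) by (apply pow_lt; lra).
  assert (0 <= INR n) by apply pos_INR.
  destruct (Req_dec (INR n + beta) 0) as [h|h].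
  - rewrite h. rewrite Rmult_0_l. unfold Rdiv. rewrite Rinv_0. ring.
  - field. lra.
Qed.

Lemma transl (g : R) (f : C -> C) (a : nat -> C) : 0 <= g < 1 -> in_B g f -> has_expansion g f a ->
  let b := fun k => Cmult (a k) (RtoC ((/ (1 - g)) ^ k)) in
  let G := fun w => f (Cplus (Omega_center g) (Cmult (RtoC (/ (1 - g))) w)) in
  (forall w, Cmod w < 1 -> is_series (fun k => Cmult (b k) (Cpow w k)) (G w)) /\
  (forall w, Cmod w < 1 -> Cmod (G w) <= 1) /\
  (forall k, Cmod (b k) = Cmod (a k) * / (1 - g) ^ k).
Proof.
  intros Hg HB HE b G.
  assert (HR : 0 < / (1 - g)) by (apply Rinv_0_lt_compat; lra).
  assert (Hin : forall w, Cmod w < 1 -> in_Omega g (Cplus (Omega_center g) (Cmult (RtoC (/ (1 - g))) w))).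
  { intros w Hw. unfold in_Omega, Omega_radius.
    replace (Cminus (Cplus (Omega_center g) (Cmult (RtoC (/ (1 - g))) w)) (Omega_center g)) with (Cmult (RtoC (/ (1 - g))) w) by ring.
    rewrite Cmod_RtoC_mult by lra. rewrite <- (Rmult_1_r (/ (1 - g))) at 2.
    apply Rmult_lt_compat_l; auto. }
  split; [|split].
  - intros w Hw. assert (H := HE _ (Hin w Hw)). unfold G.
    eapply is_series_ext; [|exact H]. intros k. simpl.
    replace (Cminus (Cplus (Omega_center g) (Cmult (RtoC (/ (1 - g))) w)) (Omega_center g)) with (Cmult (RtoC (/ (1 - g))) w) by ring.
    unfold b. rewrite Cpow_mult_l, RtoC_pow. ring.
  - intros w Hw. apply HB, Hin, Hw.
  - intros k. unfold b. rewrite Cmod_mult_R by (apply pow_le; lra). rewrite pow_inv. reflexivity.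
Qed.

Lemma sfun_root beta rho1 : 0 < beta -> rho1_eq beta rho1 = 0 -> sfun beta rho1 = / (2 * beta).
Proof. intros Hb H. rewrite rho1_eq_sfun in H. replace (/ (2 * beta)) with (/ 2 * / beta) by (field; lra). lra. Qed.

Lemma part_bound (g beta : R) (hg0 : 0 <= g) (hg1 : g < 1) (hbeta : 0 < beta) rho1 :
  0 < rho1 < 1 -> rho1_eq beta rho1 = 0 ->
  forall (f : C -> C) (a : nat -> C), in_B g f -> has_expansion g f a ->
  forall rho, 0 <= rho <= rho1 ->
  ex_series (bohr_term g beta rho a) /\ Series (bohr_term g beta rho a) <= / beta.
Proof.
  intros Hr1 Hroot f a HB HE rho Hr.
  destruct (transl g f a ltac:(lra) HB HE) as [Hs [Hb Hcm]].
  set (b := fun k => Cmult (a k) (RtoC ((/ (1 - g)) ^ k))) in *.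
  destruct (wiener b _ Hs Hb) as [Hb0 Hbn].
  set (al := Cmod (b 0%nat)) in *.
  assert (Hal : 0 <= al) by apply Cmod_ge_0.
  assert (Heq : forall n, bohr_term g beta rho a n = Cmod (b n) * rho ^ n / (INR n + beta)).
  { intros n. rewrite bohr_eq by lra. rewrite <- Hcm. reflexivity. }
  assert (Hb1 : forall n, Cmod (b n) <= 1).
  { intros [|n]. auto. assert (h := Hbn (S n) ltac:(lia)). pose proof (pow2_ge_0 al). lra. }
  assert (Hnn : forall n, 0 < INR n + beta) by (intros; pose proof (pos_INR n); lra).
  assert (Hex : ex_series (bohr_term g beta rho a)).
  { apply (exR_le _ (fun n => / beta * rho ^ n)).
    2: { apply exR_scal. apply ex_series_geom. rewrite Rabs_right; lra. }
    intros n. rewrite Heq. rewrite Rabs_right.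
    2: { apply Rle_ge. apply Rdiv_le_0_compat. apply Rmult_le_pos. apply Cmod_ge_0. apply pow_le; lra. apply Hnn. }
    assert (0 <= rho ^ n) by (apply pow_le; lra).
    assert (Cmod (b n) * rho ^ n <= rho ^ n) by (assert (h := Hb1 n); pose proof (Cmod_ge_0 (b n)); nra).
    assert (INR n + beta >= beta) by (pose proof (pos_INR n); lra).
    unfold Rdiv. rewrite Rmult_comm. apply Rmult_le_compat; auto.
    left; apply Rinv_0_lt_compat; auto. apply Rmult_le_pos; auto. apply Cmod_ge_0.
    apply Rinv_le_contravar; lra. }
  split; auto.
  rewrite Series_incr_1 by auto.
  assert (H0 : bohr_term g beta rho a 0%nat = al / beta) by (rewrite Heq; simpl; unfold al; field; lra).
  rewrite H0.
  assert (Hst := ex_sterm beta rho hbeta ltac:(rewrite Rabs_right; lra)).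
  assert (Htail : Series (fun k => bohr_term g beta rho a (S k)) <= (1 - al ^ 2) * sfun beta rho).
  { unfold sfun. rewrite <- Series_scal_l. apply Series_le.
    2: { apply exR_scal; auto. }
    intros k. rewrite Heq. split.
    - apply Rdiv_le_0_compat. apply Rmult_le_pos. apply Cmod_ge_0. apply pow_le; lra. apply Hnn.
    - unfold sterm. assert (h := Hbn (S k) ltac:(lia)). fold al in h.
      assert (0 <= rho ^ S k) by (apply pow_le; lra).
      unfold Rdiv. rewrite <- Rmult_assoc. apply Rmult_le_compat_r. left; apply Rinv_0_lt_compat, Hnn.
      apply Rmult_le_compat_r; auto. }
  assert (Hsf : sfun beta rho <= / (2 * beta)) by (rewrite <- (sfun_root beta rho1) by auto; apply sfun_le; lra).
  assert (Hal1 : 0 <= 1 - al ^ 2) by (assert (h := Hbn 1%nat ltac:(lia)); pose proof (Cmod_ge_0 (b 1%nat)); lra).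
  assert ((1 - al ^ 2) * sfun beta rho <= (1 - al ^ 2) * / (2 * beta)) by (apply Rmult_le_compat_l; auto).
  assert (al / beta + (1 - al ^ 2) * / (2 * beta) <= / beta).
  { replace (al / beta + (1 - al ^ 2) * / (2 * beta)) with (/ beta - (al - 1) ^ 2 * / (2 * beta)) by (field; lra).
    assert (0 <= (al - 1) ^ 2 * / (2 * beta)) by (apply Rmult_le_pos; [apply pow2_ge_0| left; apply Rinv_0_lt_compat; lra]).
    lra. }
  lra.
Qed.
Lemma cgeom (q : C) : Cmod q < 1 -> is_series (fun k => Cpow q k) (Cinv (Cminus (RtoC 1) q)).
Proof.
  intros Hq.
  assert (Hd : Cminus (RtoC 1) q <> RtoC 0).
  { intros H. assert (q = RtoC 1) by (replace q with (Cminus (RtoC 1) (Cminus (RtoC 1) q)) by ring; rewrite H; ring).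
    subst. rewrite Cmod_1 in Hq. lra. }
  assert (Hdm : 0 < Cmod (Cminus (RtoC 1) q)) by (apply Cmod_gt_0; auto).
  unfold is_series. apply (filterlim_locally_ball_norm (K := C_AbsRing)). intros eps.
  assert (Hl := is_lim_seq_geom (Cmod q) ltac:(rewrite Rabs_right; [lra| apply Rle_ge, Cmod_ge_0])).
  apply is_lim_seq_Reals in Hl.
  destruct (Hl (eps * Cmod (Cminus (RtoC 1) q)) ltac:(apply Rmult_lt_0_compat; [apply cond_pos| auto])) as [N HN].
  exists N. intros n Hn. unfold ball_norm.
  change (Cmod (Cminus (sum_n (fun k => Cpow q k) n) (Cinv (Cminus (RtoC 1) q))) < eps).
  rewrite <- csum_sum_n.
  assert (Hg := geom_csum q (S n)).
  set (Sg := csum (fun j => Cpow q j) (S n)) in *.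
  assert (HS : Sg = Cmult (Cminus (RtoC 1) (Cpow q (S n))) (Cinv (Cminus (RtoC 1) q))).
  { transitivity (Cmult (Cmult Sg (Cminus q (RtoC 1))) (Cinv (Cminus q (RtoC 1)))).
    field. intros H. apply Hd. replace (Cminus (RtoC 1) q) with (Copp (Cminus q (RtoC 1))) by ring. rewrite H. ring.
    rewrite Hg. field. split; auto. intros H. apply Hd. replace (Cminus (RtoC 1) q) with (Copp (Cminus q (RtoC 1))) by ring. rewrite H. ring. }
  rewrite HS.
  replace (Cminus (Cmult (Cminus (RtoC 1) (Cpow q (S n))) (Cinv (Cminus (RtoC 1) q))) (Cinv (Cminus (RtoC 1) q)))
    with (Cmult (Copp (Cpow q (S n))) (Cinv (Cminus (RtoC 1) q))) by ring.
  rewrite Cmod_mult, Cmod_opp, Cmod_inv, Cmod_pow by auto.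
  assert (h := HN n Hn). unfold Rdist in h. rewrite Rminus_0_r, Rabs_right in h by (apply Rle_ge, pow_le, Cmod_ge_0).
  assert (Cmod q ^ S n <= Cmod q ^ n).
  { simpl. pose proof (Cmod_ge_0 q). assert (0 <= Cmod q ^ n) by (apply pow_le; lra). nra. }
  apply Rmult_lt_reg_r with (Cmod (Cminus (RtoC 1) q)); auto.
  rewrite Rmult_assoc, Rinv_l by lra. lra.
Qed.

Definition bb (al : R) (k : nat) : C :=
  match k with O => RtoC al | S k => RtoC (- (1 - al ^ 2) * al ^ k) end.
Definition Mob (al : R) (w : C) : C :=
  Cmult (Cminus (RtoC al) w) (Cinv (Cminus (RtoC 1) (Cmult (RtoC al) w))).

Lemma Mob_den al w : 0 <= al < 1 -> Cmod w < 1 -> Cminus (RtoC 1) (Cmult (RtoC al) w) <> RtoC 0.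
Proof.
  intros Ha Hw H.
  assert (Cmult (RtoC al) w = RtoC 1).
  { replace (Cmult (RtoC al) w) with (Cminus (RtoC 1) (Cminus (RtoC 1) (Cmult (RtoC al) w))) by ring. rewrite H. ring. }
  assert (h := f_equal Cmod H0). rewrite Cmod_1, Cmod_RtoC_mult in h by lra.
  pose proof (Cmod_ge_0 w). nra.
Qed.

Lemma mobius al w : 0 <= al < 1 -> Cmod w < 1 ->
  is_series (fun k => Cmult (bb al k) (Cpow w k)) (Mob al w).
Proof.
  intros Ha Hw.
  set (q := Cmult (RtoC al) w).
  assert (Hq : Cmod q < 1) by (unfold q; rewrite Cmod_RtoC_mult by lra; pose proof (Cmod_ge_0 w); nra).
  assert (Hden := Mob_den al w Ha Hw). fold q in Hden.
  set (c := Cmult (RtoC (- (1 - al ^ 2))) w).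
  assert (H := @is_series_scal_l C_AbsRing C_NormedModule c _ _ (cgeom q Hq)).
  apply is_series_decr_1.
  assert (E1 : Cmult c (Cinv (Cminus (RtoC 1) q)) = Cplus (Mob al w) (Copp (Cmult (bb al 0) (Cpow w 0)))).
  { unfold Mob, c, q in *. simpl bb. simpl Cpow. rewrite RtoC_opp, RtoC_minus, <- RtoC_pow. field. auto. }
  change (scal c (Cinv (Cminus (RtoC 1) q))) with (Cmult c (Cinv (Cminus (RtoC 1) q))) in H.
  rewrite E1 in H.
  assert (Hk : forall k, Cmult c (Cpow q k) = Cmult (bb al (S k)) (Cpow w (S k))).
  { intros k. change (bb al (S k)) with (RtoC (- (1 - al ^ 2) * al ^ k)). unfold c, q. rewrite Cpow_mult_l, RtoC_pow, Cpow_S. rewrite RtoC_mult. ring. }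
  eapply is_series_ext; [|exact H]. intros k. exact (Hk k).
Qed.

Lemma Mob_bound al w : 0 <= al < 1 -> Cmod w < 1 -> Cmod (Mob al w) <= 1.
Proof.
  intros Ha Hw. unfold Mob.
  assert (Hden := Mob_den al w Ha Hw).
  rewrite Cmod_mult, Cmod_inv by auto.
  assert (Hp : 0 < Cmod (Cminus (RtoC 1) (Cmult (RtoC al) w))) by (apply Cmod_gt_0; auto).
  apply Rmult_le_reg_r with (Cmod (Cminus (RtoC 1) (Cmult (RtoC al) w))); auto.
  rewrite Rmult_assoc, Rinv_l, Rmult_1_r, Rmult_1_l by lra.
  assert (Hsq : Cmod (Cminus (RtoC al) w) ^ 2 <= Cmod (Cminus (RtoC 1) (Cmult (RtoC al) w)) ^ 2).
  { rewrite !cmod2. assert (Hw2 := cmod2 w).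
    assert (Cmod w ^ 2 < 1) by (pose proof (Cmod_ge_0 w); nra).
    destruct w as [x y]. simpl in *. 
    assert (0 <= (1 - al ^ 2) * (1 - (x ^ 2 + y ^ 2))) by (apply Rmult_le_pos; nra).
    nra. }
  pose proof (Cmod_ge_0 (Cminus (RtoC al) w)). nra.
Qed.

Lemma part_sharp (g beta : R) (hg0 : 0 <= g) (hg1 : g < 1) (hbeta : 0 < beta) rho1 :
  0 < rho1 < 1 -> rho1_eq beta rho1 = 0 ->
  forall rho : R, rho1 < rho < 1 ->
  exists (f : C -> C) (a : nat -> C),
    in_B g f /\ has_expansion g f a /\
    ex_series (bohr_term g beta rho a) /\ Series (bohr_term g beta rho a) > / beta.
Proof.
  intros Hr1 Hroot rho Hr.
  assert (Hsf : / (2 * beta) < sfun beta rho) by (rewrite <- (sfun_root beta rho1) by auto; apply sfun_incr; lra).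
  assert (Hst := ex_sterm beta rho hbeta ltac:(rewrite Rabs_right; lra)).
  assert (Hl : is_lim_seq (sum_n (sterm beta rho)) (sfun beta rho)) by exact (Series_correct _ Hst).
  apply is_lim_seq_Reals in Hl.
  destruct (Hl (sfun beta rho - / (2 * beta)) ltac:(lra)) as [M HM].
  assert (h := HM M ltac:(lia)). unfold Rdist in h. rewrite sum_n_Reals in h. apply Rabs_def2 in h.
  set (P := sum_f_R0 (sterm beta rho) M) in *.
  assert (HP : / (2 * beta) < P) by lra.
  assert (Hb2 : 0 < / (2 * beta)) by (apply Rinv_0_lt_compat; lra).
  assert (Hib : / beta = 2 * / (2 * beta)) by (field; lra).
  set (Mr := INR M). assert (HMr : 0 <= Mr) by apply pos_INR.
  set (X := (2 * P - / beta) / (2 * (2 * Mr + 1) * P)).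
  assert (HX : 0 < X) by (unfold X; apply Rdiv_lt_0_compat; [lra| apply Rmult_lt_0_compat; lra]).
  set (d := Rmin (1/2) X).
  assert (Hd0 : 0 < d) by (apply Rmin_pos; lra).
  assert (Hd1 : d <= 1/2) by apply Rmin_l.
  assert (Hd2 : d * ((2 * Mr + 1) * P) <= (2 * P - / beta) / 2).
  { assert (d <= X) by apply Rmin_r.
    apply Rmult_le_compat_r with (r := (2 * Mr + 1) * P) in H; [|apply Rmult_le_pos; lra].
    unfold X in H. replace ((2 * P - / beta) / (2 * (2 * Mr + 1) * P) * ((2 * Mr + 1) * P)) with ((2 * P - / beta) / 2) in H by (field; lra). lra. }
  set (al := 1 - d).
  assert (Hal : 0 <= al < 1) by (unfold al; lra).
  set (a := fun k => Cmult (bb al k) (RtoC ((1 - g) ^ k))).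
  set (f := fun z => Mob al (Cmult (Cminus z (Omega_center g)) (RtoC (1 - g)))).
  assert (Hw : forall z, in_Omega g z -> Cmod (Cmult (Cminus z (Omega_center g)) (RtoC (1 - g))) < 1).
  { intros z Hz. unfold in_Omega, Omega_radius in Hz. rewrite Cmod_mult_R by lra.
    apply Rmult_lt_compat_r with (r := 1 - g) in Hz; [|lra]. rewrite Rinv_l in Hz by lra. auto. }
  exists f, a. split; [|split].
  - intros z Hz. unfold f. apply Mob_bound; auto.
  - intros z Hz. unfold f. eapply is_series_ext; [|apply (mobius al _ Hal (Hw z Hz))].
    intros k. assert (Hk : Cmult (bb al k) (Cpow (Cmult (Cminus z (Omega_center g)) (RtoC (1 - g))) k) = Cmult (a k) (Cpow (Cminus z (Omega_center g)) k)).
    { unfold a. rewrite Cpow_mult_l, RtoC_pow. ring. }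
    exact Hk.
  - assert (Hcb : forall n, Cmod (a n) * / (1 - g) ^ n = Cmod (bb al n)).
    { intros n. unfold a. rewrite Cmod_mult_R by (apply pow_le; lra). field. apply pow_nonzero. lra. }
    assert (Heq : forall n, bohr_term g beta rho a n = Cmod (bb al n) * rho ^ n / (INR n + beta)).
    { intros n. rewrite bohr_eq by lra. rewrite Hcb. reflexivity. }
    assert (Hbb0 : Cmod (bb al 0) = al) by (simpl; rewrite Cmod_R, Rabs_right; lra).
    assert (HbbS : forall k, Cmod (bb al (S k)) = (1 - al ^ 2) * al ^ k).
    { intros k. simpl. rewrite Cmod_R. rewrite Rabs_left1. ring.
      assert (0 <= al ^ k) by (apply pow_le; lra). assert (0 <= 1 - al ^ 2) by nra. nra. }
    assert (Hbb1 : forall n, Cmod (bb al n) <= 1).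
    { intros [|k]. rewrite Hbb0; lra. rewrite HbbS.
      assert (0 <= al ^ k) by (apply pow_le; lra). assert (al ^ k <= 1) by (apply Rle_trans with (1 ^ k); [apply pow_incr; lra| rewrite pow1; lra]).
      assert (0 <= 1 - al ^ 2 <= 1) by nra. nra. }
    assert (Hnn : forall n, 0 < INR n + beta) by (intros; pose proof (pos_INR n); lra).
    assert (Hex : ex_series (bohr_term g beta rho a)).
    { apply (exR_le _ (fun n => / beta * rho ^ n)).
      2: { apply exR_scal. apply ex_series_geom. rewrite Rabs_right; lra. }
      intros n. rewrite Heq. rewrite Rabs_right.
      2: { apply Rle_ge. apply Rdiv_le_0_compat. apply Rmult_le_pos. apply Cmod_ge_0. apply pow_le; lra. apply Hnn. }
      assert (0 <= rho ^ n) by (apply pow_le; lra).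
      assert (Cmod (bb al n) * rho ^ n <= rho ^ n) by (assert (h1 := Hbb1 n); pose proof (Cmod_ge_0 (bb al n)); nra).
      assert (INR n + beta >= beta) by (pose proof (pos_INR n); lra).
      unfold Rdiv. rewrite Rmult_comm. apply Rmult_le_compat; auto.
      left; apply Rinv_0_lt_compat; auto. apply Rmult_le_pos; auto. apply Cmod_ge_0.
      apply Rinv_le_contravar; lra. }
    split; auto.
    rewrite Series_incr_1 by auto.
    assert (H0 : bohr_term g beta rho a 0%nat = al / beta) by (rewrite Heq, Hbb0; simpl; field; lra).
    rewrite H0.
    set (T := Series (fun k => al ^ k * sterm beta rho k)).
    assert (HexT : ex_series (fun k => al ^ k * sterm beta rho k)).
    { apply (exR_le _ (fun k => rho ^ k)). 2: apply ex_series_geom; rewrite Rabs_right; lra.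
      intros k. rewrite Rabs_mult. assert (h1 := sterm_bound beta rho rho k hbeta ltac:(rewrite Rabs_right; lra) ltac:(lra)).
      rewrite Rabs_right by (apply Rle_ge, pow_le; lra).
      assert (0 <= al ^ k) by (apply pow_le; lra). assert (al ^ k <= 1) by (apply Rle_trans with (1 ^ k); [apply pow_incr; lra| rewrite pow1; lra]).
      pose proof (Rabs_pos (sterm beta rho k)). nra. }
    assert (HT : Series (fun k => bohr_term g beta rho a (S k)) = (1 - al ^ 2) * T).
    { unfold T. rewrite <- Series_scal_l. apply Series_ext. intros k. rewrite Heq, HbbS. unfold sterm. field.
      apply Rgt_not_eq, Hnn. }
    rewrite HT.
    assert (HT1 : al ^ M * P <= T).
    { eapply Rle_trans. 2: apply (Series_ge_partial _ M); auto.
      2: { intros k. apply Rmult_le_pos. apply pow_le; lra. apply sterm_nonneg; lra. }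
      unfold P. rewrite scal_sum. apply sum_Rle. intros k Hk. rewrite Rmult_comm.
      apply Rmult_le_compat_r. apply sterm_nonneg; lra. apply pow_anti; [lra|lia]. }
    assert (HaM : 1 - Mr * d <= al ^ M) by (unfold al, Mr; apply bernoulli; lra).
    assert (HPpos : 0 < P) by lra.
    assert (Hkey : / beta < (1 + al) * T).
    { assert ((1 + al) * ((1 - Mr * d) * P) <= (1 + al) * T).
      { apply Rmult_le_compat_l. lra. apply Rle_trans with (al ^ M * P); auto. apply Rmult_le_compat_r; lra. }
      assert ((1 + al) * ((1 - Mr * d) * P) >= (2 - (2 * Mr + 1) * d) * P).
      { unfold al. assert (0 <= Mr * d * d * P) by (repeat apply Rmult_le_pos; lra). nra. }
      nra. }
    assert (Hfin : al / beta + (1 - al ^ 2) * T - / beta = d * ((1 + al) * T - / beta)).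
    { unfold al. field. lra. }
    assert (0 < d * ((1 + al) * T - / beta)) by (apply Rmult_lt_0_compat; lra).
    lra.
Qed.

Theorem theorem2 (g beta : R) (hg0 : 0 <= g) (hg1 : g < 1) (hbeta : 0 < beta) :
  (exists! rho1 : R, 0 < rho1 < 1 /\ rho1_eq beta rho1 = 0) /\
  (forall rho1 : R, 0 < rho1 < 1 -> rho1_eq beta rho1 = 0 ->
     (forall (f : C -> C) (a : nat -> C),
        in_B g f -> has_expansion g f a ->
        forall rho : R, 0 <= rho <= rho1 ->
          ex_series (bohr_term g beta rho a) /\
          Series (bohr_term g beta rho a) <= / beta) /\
     (forall rho : R, rho1 < rho < 1 ->
        exists (f : C -> C) (a : nat -> C),
          in_B g f /\ has_expansion g f a /\
          ex_series (bohr_term g beta rho a) /\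
          Series (bohr_term g beta rho a) > / beta)).
Proof.
  split. apply root_unique; auto.
  intros rho1 Hr1 Hroot. split.
  - apply (part_bound g beta hg0 hg1 hbeta rho1 Hr1 Hroot).
  - apply (part_sharp g beta hg0 hg1 hbeta rho1 Hr1 Hroot).
Qed.
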